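(* Let $\mathcal D=(\mathsf D_1,\dots,\mathsf D_m)$ be a family of even cycles that contains no rainbow even cycle, and suppose $\mathcal D$ contains a rainbow $5$-cycle $\widetilde{\mathsf C}=\{\mathsf e_i=(v_iv_{i+1},\alpha_i): i=1,\dots,5\}$ (indices of $v$ and $\alpha$ taken modulo $5$, so $v_6=v_1$). Then there exist a shift $j\in\{0,1,2,3,4\}$, a vertex $v^*\notin\{v_1,\dots,v_5\}$ and an index $k\in\{1,\dots,5\}$ such that all five edges $(v_iv_{i+1},\alpha_{i+j})$, $i=1,\dots,5$, belong to $\mathcal D$, and at least one of the edges $(v^*v_k,\alpha_{k+j-1})$, $(v^*v_k,\alpha_{k+j})$ belongs to $\mathcal D$.
   Context: A (colored) graph is a finite set $\mathsf G$ of pairs $(e,\alpha)$, where the $e$'s are pairwise distinct 2-element subsets $\{u,v\}$ (written $uv$) of a vertex set and $\alpha$ is a color (colors may repeat). $\chi(\mathsf G)$ is its set of colors; $\mathsf G$ is rainbow if $|\chi(\mathsf G)|=|\mathsf G|$. A cycle is a colored graph whose underlying uncolored edges form a cycle; a $k$-cycle has $k$ edges; even cycles have even length. A family of cycles is a list $\mathcal D=(\mathsf D_1,\dots,\mathsf D_m)$ of cycles on a common vertex set, where all edges of $\mathsf D_i$ receive one color and different $\mathsf D_i$ receive different colors (underlying uncolored cycles may coincide). An edge $(uv,\alpha)$ belongs to $\mathcal D$ if it belongs to some $\mathsf D_i$ (necessarily the one of color $\alpha$). $\mathcal D$ contains a graph $\mathsf G$ if $\mathsf G\subseteq\bigcup_i\mathsf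 D_i$; a rainbow even cycle in $\mathcal D$ is a contained graph that is a rainbow even cycle. *)

(* Defs.v *)
From mathcomp Require Import all_boot.
Set Implicit Arguments. Unset Strict Implicit. Unset Printing Implicit Defensive.

(* An (uncolored) cycle on vertex type V is represented by the cyclic sequence
   of its vertices [c_0; ...; c_{n-1}], pairwise distinct, n >= 3;
   its edges are c_k c_{k+1 mod n}.  Its length is n. *)
Definition is_cycle (V : eqType) (c : seq V) : bool := uniq c && (2 < size c).

Definition even_cycle (V : eqType) (c : seq V) : bool :=
  is_cycle c && ~~ odd (size c).

Definition cyc_edge (V : eqType) (c : seq V) (u v : V) : bool :=
  ((u \in c) && (next c u == v)) || ((v \in c) && (next c v == u)).

(* A family of cycles D = (D_1,...,D_m): D i is the underlying cycle of D_i,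
   and the (common) colour of all edges of D_i is i itself (colours are
   pairwise distinct across the family, so colours are identified with indices). *)
Definition in_family (V : eqType) (m : nat) (D : 'I_m -> seq V)
  (u v : V) (a : 'I_m) : bool := cyc_edge (D a) u v.

Definition family_of_even_cycles (V : eqType) (m : nat) (D : 'I_m -> seq V) :=
  forall a : 'I_m, even_cycle (D a).

Definition has_rainbow_even_cycle (V : eqType) (m : nat) (D : 'I_m -> seq V) :=
  exists (c : seq V) (cols : seq 'I_m) (a0 : 'I_m) (v0 : V),
    [/\ even_cycle c, size cols = size c, uniq cols &
        forall k, k < size c ->
          in_family D (nth v0 c k) (nth v0 c (k.+1 %% size c)) (nth a0 cols k)].

(* Main.v *)
Require Import Defs.
From mathcomp Require Import all_boot zify.
Set Implicit Arguments. Unset Strict Implicit. Unset Printing Implicit Defensive.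


Lemma index_next (V : eqType) (c : seq V) x : uniq c -> x \in c ->
  index (next c x) c = (index x c).+1 %% size c.
Proof.
move=> Uc xc; rewrite next_nth xc.
case: c Uc xc => [//|y p] Uc xc.
have : index x (y :: p) <= size p by rewrite -ltnS index_mem.
rewrite leq_eqVlt => /orP[/eqP E | lt].
- by rewrite E nth_default // index_head /= modnn.
- rewrite -[nth y p _]/(nth y (y::p) (index x (y::p)).+1) index_uniq //=.
  by rewrite modn_small.
Qed.

Lemma mem_iter_next (V : eqType) (c : seq V) x d : x \in c -> iter d (next c) x \in c.
Proof. by move=> xc; elim: d => //= d IH; rewrite mem_next. Qed.

Lemma index_iter (V : eqType) (c : seq V) x d : uniq c -> x \in c ->
  index (iter d (next c) x) c = (index x c + d) %% size c.
Proof.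
move=> Uc xc; elim: d => [|d IH].
- by rewrite addn0 modn_small // index_mem.
- rewrite iterS index_next //; last exact: mem_iter_next.
  by rewrite IH -addn1 modnDml addn1 addnS.
Qed.

Lemma small_ndvd s d : 2 < s -> ~~ odd s -> d \in [:: 1; 2; 3; 5] -> ~~ (s %| d).
Proof.
move=> s2 ev; rewrite !inE => dD; apply/negP => sd.
have : s <= d by apply: dvdn_leq => //; case/or4P: dD => /eqP->.
case/or4P: dD sd => /eqP-> sd; move: s2 ev sd.
all: by do 6!(case: s => [|s] //).
Qed.

Lemma iter_next_neq (V : eqType) (c : seq V) x d : even_cycle c -> x \in c ->
  d \in [:: 1; 2; 3; 5] -> iter d (next c) x != x.
Proof.
case/andP=> /andP[Uc s2] ev xc dD; apply/negP => /eqP E.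
have := index_iter d Uc xc; rewrite E.
have lt : index x c < size c by rewrite index_mem.
rewrite -{1}(modn_small lt) => /esym /eqP.
rewrite -{2}[index x c]addn0 eqn_modDl mod0n => sd.
by move: (small_ndvd s2 ev dD); rewrite /dvdn sd.
Qed.

Lemma prev_next_eq (V : eqType) (c : seq V) u w : uniq c ->
  (u \in c) && (prev c u == w) = (w \in c) && (next c w == u).
Proof.
move=> Uc; apply/idP/idP.
- by case/andP=> uc /eqP <-; rewrite mem_prev uc next_prev ?eqxx.
- by case/andP=> wc /eqP <-; rewrite mem_next wc prev_next ?eqxx.
Qed.

Definition orc (V : eqType) (c : seq V) x y := if next c x == y then c else rev c.

Lemma orc_ok (V : eqType) (c : seq V) x y : even_cycle c -> cyc_edge c x y ->
  [/\ even_cycle (orc c x y), cyc_edge (orc c x y) =2 cyc_edge c,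
      next (orc c x y) x = y & x \in orc c x y].
Proof.
move=> ec; have Uc : uniq c by case/andP: ec => /andP[].
rewrite /orc; case: ifP => [/eqP nx | nx] E.
- have xc : x \in c.
    case/orP: E => /andP[//] yc /eqP ny; by rewrite -ny mem_next.
  by split.
- have Ecr : cyc_edge (rev c) =2 cyc_edge c.
    move=> u w; rewrite /cyc_edge !mem_rev !next_rev //.
    by rewrite !prev_next_eq // orbC.
  have [yc ny] : y \in c /\ next c y = x.
    case/orP: E => /andP[] ? Ne; first by rewrite Ne in nx.
    by split => //; apply/eqP.
  split => //.
  + by move: ec; rewrite /even_cycle /is_cycle rev_uniq size_rev.
  + by rewrite next_rev // -ny prev_next.
  + by rewrite mem_rev -ny mem_next.
Qed.

Lemma edge_next (V : eqType) (c : seq V) x : x \in c -> cyc_edge c x (next c x).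
Proof. by move=> xc; rewrite /cyc_edge xc eqxx. Qed.

Lemma cyc_edgeC (V : eqType) (c : seq V) x y : cyc_edge c x y = cyc_edge c y x.
Proof. by rewrite /cyc_edge orbC. Qed.

Lemma rainbow_cert (V : eqType) m (D : 'I_m -> seq V) (v : nat -> V) (al : nat -> 'I_m)
  (xs cs : seq nat) :
  {in gtn 5 &, injective v} -> {in gtn 5 &, injective al} ->
  size xs = 4 -> size cs = 4 -> uniq xs -> uniq cs -> all (gtn 5) xs -> all (gtn 5) cs ->
  (forall k, k < 4 -> in_family D (v (nth 0 xs k)) (v (nth 0 xs (k.+1 %% 4))) (al (nth 0 cs k))) ->
  has_rainbow_even_cycle D.
Proof.
move=> Iv Ia sx sc ux uc ax ac He.
exists (map v xs), (map al cs), (al 0), (v 0); split.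
- rewrite /even_cycle /is_cycle size_map sx andbT andbT.
  rewrite map_inj_in_uniq // => a b /(allP ax) ha /(allP ax) hb; exact: Iv.
- by rewrite !size_map sx sc.
- rewrite map_inj_in_uniq // => a b /(allP ac) ha /(allP ac) hb; exact: Ia.
- rewrite size_map sx => k k4.
  rewrite !(nth_map 0) ?sx ?sc ?ltn_mod //; exact: He.
Qed.

Definition e2 (a b x y : nat) := ((a == x) && (b == y)) || ((a == y) && (b == x)).

Definition kedge (ps : seq (nat * nat)) (i x y : nat) : bool :=
  let pn := nth (0,0) ps i in
  [|| e2 i (i.+1 %% 5) x y, e2 pn.1 i x y | e2 (i.+1 %% 5) pn.2 x y].

Definition quad (l0 l1 l2 l3 : seq nat) : seq (seq nat) :=
  [seq a :: t | a <- l0, t <- [seq b :: t | b <- l1, t <- [seq [:: c; d] | c <- l2, d <- l3]]].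

Definition i5 := iota 0 5.

Definition cycles : seq (seq nat) := [:: [:: 0; 1; 2; 3]; [:: 0; 1; 3; 2]; [:: 0; 2; 1; 3]; [:: 0; 1; 2; 4]; [:: 0; 1; 4; 2]; [:: 0; 2; 1; 4]; [:: 0; 1; 3; 4]; [:: 0; 1; 4; 3]; [:: 0; 3; 1; 4]; [:: 0; 2; 3; 4]; [:: 0; 2; 4; 3]; [:: 0; 3; 2; 4]; [:: 1; 2; 3; 4]; [:: 1; 2; 4; 3]; [:: 1; 3; 2; 4]].

Definition ked ps xs k i := kedge ps i (nth 0 xs k) (nth 0 xs (k.+1 %% 4)).

Definition certok ps xs cs := [&& size xs == 4, size cs == 4, uniq xs, uniq cs,
  all (gtn 5) xs, all (gtn 5) cs & all (fun k => ked ps xs k (nth 0 cs k)) (iota 0 4)].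

Definition colcands ps xs :=
  let l k := [seq i <- i5 | ked ps xs k i] in quad (l 0) (l 1) (l 2) (l 3).

Definition rb ps := has (fun xs => has (certok ps xs) (colcands ps xs)) cycles.

Definition valid (i : nat) (pn : nat * nat) :=
  [&& pn.1 != i, pn.1 != i.+1 %% 5, pn.2 != i, pn.2 != i.+1 %% 5 & pn.1 != pn.2].

Definition opts i := [seq pn <- [seq (a, b) | a <- i5, b <- i5] | valid i pn].

Definition allY (ps : seq (nat * nat)) :=
  all (fun i => nth (0,0) ps i == ((i + 4) %% 5, (i + 2) %% 5)) i5.

Definition checkB :=
  all (fun a0 => all (fun a1 => all (fun a2 => all (fun a3 => all (fun a4 =>
    let ps := [:: a0; a1; a2; a3; a4] in allY ps || rb ps)
  (opts 4)) (opts 3)) (opts 2)) (opts 1)) (opts 0).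

Lemma checkB_ok : checkB.
Proof. vm_compute. reflexivity. Qed.

Lemma rb_sound (V : eqType) m (D : 'I_m -> seq V) (v : nat -> V) (al : nat -> 'I_m) ps :
  {in gtn 5 &, injective v} -> {in gtn 5 &, injective al} ->
  (forall i x y, i < 5 -> x < 5 -> y < 5 -> kedge ps i x y -> in_family D (v x) (v y) (al i)) ->
  rb ps -> has_rainbow_even_cycle D.
Proof.
move=> Iv Ia Hk /hasP[xs _ /hasP[cs _ ok]].
case/andP: ok => /eqP sx /andP[/eqP sc /and5P[ux uc ax ac /allP ed]].
apply: (rainbow_cert (v:=v) (al:=al) (xs:=xs) (cs:=cs)) => // k k4.
have := ed k; rewrite mem_iota add0n => /(_ k4); rewrite /ked.
apply: Hk.
- by apply: (allP ac); rewrite mem_nth ?sc.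
- by apply: (allP ax); rewrite mem_nth ?sx.
- by apply: (allP ax); rewrite mem_nth ?sx // ltn_mod.
Qed.

Lemma checkB_use (P N : nat -> nat) :
  (forall i, i < 5 -> [/\ P i < 5, N i < 5 & valid i (P i, N i)]) ->
  let ps := [seq (P i, N i) | i <- i5] in allY ps || rb ps.
Proof.
move=> Hv; have := checkB_ok; rewrite /checkB.
have Ho : forall i, i < 5 -> (P i, N i) \in opts i.
  move=> i i5; have [h1 h2 h3] := Hv i i5; rewrite mem_filter h3 andTb.
  by apply: allpairs_f; rewrite mem_iota.
move=> /allP /(_ _ (Ho 0 isT)) /allP /(_ _ (Ho 1 isT)) /allP /(_ _ (Ho 2 isT))
  /allP /(_ _ (Ho 3 isT)) /allP /(_ _ (Ho 4 isT)).
done.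
Qed.

Definition Cc (V : eqType) m (D : 'I_m -> seq V) (v : nat -> V) (al : nat -> 'I_m) i :=
  orc (D (al i)) (v i) (v (i.+1 %% 5)).

Definition inS (V : eqType) (v : nat -> V) x := [exists t : 'I_5, x == v t].

Lemma notinS (V : eqType) (v : nat -> V) x : ~~ inS v x -> forall t, t < 5 -> x != v t.
Proof. move=> H t t5; apply: contra H => /eqP->; apply/existsP; by exists (Ordinal t5). Qed.

Lemma inS_find (V : eqType) (v : nat -> V) x : inS v x ->
  let t := find (fun t => x == v t) (iota 0 5) in t < 5 /\ x = v t.
Proof.
move=> /existsP[t /eqP E] /=.
have H : has (fun t => x == v t) (iota 0 5) by apply/hasP; exists (val t); rewrite ?mem_iota ?E //=.
split; first by move: H; rewrite has_find size_iota.
have := nth_find 0 H; rewrite nth_iota ?add0n; first by move/eqP.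
by move: H; rewrite has_find size_iota.
Qed.

Lemma neq_idx (V : eqType) (v : nat -> V) a b : v a != v b -> a != b.
Proof. by apply: contraNneq => ->. Qed.

Lemma e2_sound (V : eqType) m (D : 'I_m -> seq V) (c : 'I_m) (v : nat -> V) a b x y :
  in_family D (v a) (v b) c -> e2 a b x y -> in_family D (v x) (v y) c.
Proof.
rewrite /e2 /in_family => H /orP[/andP[/eqP<- /eqP<-] | /andP[/eqP<- /eqP<-]] //.
by rewrite cyc_edgeC.
Qed.
Unset Implicit Arguments.

Theorem lemma3p6 (V : eqType) (m : nat) (D : 'I_m -> seq V)
  (v : nat -> V) (al : nat -> 'I_m) :
  family_of_even_cycles D ->
  ~ has_rainbow_even_cycle D ->
  {in gtn 5 &, injective v} ->
  {in gtn 5 &, injective al} ->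
  (forall i, i < 5 -> in_family D (v i) (v (i.+1 %% 5)) (al i)) ->
  exists j vs k,
    [/\ j < 5, k < 5, (forall i, i < 5 -> vs != v i),
        (forall i, i < 5 -> in_family D (v i) (v (i.+1 %% 5)) (al ((i + j) %% 5))) &
        in_family D vs (v k) (al ((k + j + 4) %% 5))
        || in_family D vs (v k) (al ((k + j) %% 5))].
Proof.
move=> Hfam Hnr Iv Ia He.
pose C := Cc D v al.
have HC : forall i, i < 5 -> [/\ even_cycle (C i),
    forall x y, cyc_edge (C i) x y = in_family D x y (al i),
    next (C i) (v i) = v (i.+1 %% 5) & v i \in C i].
  move=> i i5; have [h1 h2 h3 h4] := orc_ok (Hfam (al i)) (He i i5); by split.
have UC : forall i, i < 5 -> uniq (C i).
  by move=> i i5; have [/andP[/andP[]]] := HC i i5.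
have Fam : forall i x, i < 5 -> x \in C i -> in_family D x (next (C i) x) (al i).
  move=> i x i5 xc; have [_ E _ _] := HC i i5; by rewrite -E edge_next.
have FamC : forall i x, i < 5 -> x \in C i -> in_family D (next (C i) x) x (al i).
  by move=> i x i5 xc; rewrite /in_family cyc_edgeC; apply: Fam.
have NE : forall i x d, i < 5 -> x \in C i -> d \in [:: 1; 2; 3; 5] ->
    iter d (next (C i)) x != x.
  by move=> i x d i5 xc dd; have [ec _ _ _] := HC i i5; apply: iter_next_neq.
pose p i := prev (C i) (v i).
pose n i := next (C i) (v (i.+1 %% 5)).
have v1C : forall i, i < 5 -> v (i.+1 %% 5) \in C i.
  by move=> i i5; have [_ _ <- vc] := HC i i5; rewrite mem_next.
have pC : forall i, i < 5 -> p i \in C i.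
  by move=> i i5; have [_ _ _ vc] := HC i i5; rewrite mem_prev.
have np : forall i, i < 5 -> next (C i) (p i) = v i.
  by move=> i i5; rewrite next_prev // UC.
have j0 : forall t, t < 5 -> in_family D (v t) (v (t.+1 %% 5)) (al ((t + 0) %% 5)).
  by move=> t t5; rewrite addn0 (modn_small t5); apply: He.
case: (boolP [forall i : 'I_5, inS v (p i) && inS v (n i)]) => [Hin | /forallPn [i]].
2:{ rewrite negb_and => /orP[Hp | Hn].
  - exists 0, (p i), i; split => //; first exact: notinS.
    apply/orP; right; rewrite addn0 (modn_small (ltn_ord i)).
    by have := Fam i (p i) (ltn_ord i) (pC i (ltn_ord i)); rewrite np.
  - exists 0, (n i), (i.+1 %% 5); split => //; first by rewrite ltn_mod.
      exact: notinS.
    apply/orP; left.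
    have -> : (i.+1 %% 5 + 0 + 4) %% 5 = i by clear Hn; case: i => [[|[|[|[|[|]]]]]].
    exact: FamC (ltn_ord i) (v1C i (ltn_ord i)). }
pose P i := find (fun t => p i == v t) (iota 0 5).
pose N i := find (fun t => n i == v t) (iota 0 5).
have HPN : forall i, i < 5 -> [/\ P i < 5, p i = v (P i), N i < 5 & n i = v (N i)].
  move=> i i5; move/forallP: Hin => /(_ (Ordinal i5)) /andP[h1 h2].
  have [a1 a2] := inS_find h1; have [b1 b2] := inS_find h2; by split.
have nv : forall i, i < 5 -> next (C i) (v i) = v (i.+1 %% 5).
  by move=> i i5; have [] := HC i i5.
have Hval : forall i, i < 5 -> [/\ P i < 5, N i < 5 & valid i (P i, N i)].
  move=> i i5; have [h1 h2 h3 h4] := HPN i i5; split => //.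
  have vC : v i \in C i by have [] := HC i i5.
  rewrite /valid /=; apply/and5P; split; apply: (neq_idx (v:=v)); rewrite -?h2 -?h4.
  - by have := NE i (p i) 1 i5 (pC i i5) isT; rewrite /= np // eq_sym.
  - by have := NE i (p i) 2 i5 (pC i i5) isT; rewrite /= np // nv // eq_sym.
  - by have := NE i (v i) 2 i5 vC isT; rewrite /= nv.
  - by have := NE i (v (i.+1 %% 5)) 1 i5 (v1C i i5) isT.
  - by have := NE i (p i) 3 i5 (pC i i5) isT; rewrite /= np // nv // eq_sym.
have := checkB_use Hval; cbv zeta; case/orP=> [HY | Hrb]; last first.
  exfalso; apply: Hnr; apply: (rb_sound (v:=v) (al:=al) Iv Ia _ Hrb) => i x y i5 x5 y5.
  rewrite /kedge (nth_map 0) ?size_iota // nth_iota // add0n /=.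
  case/or3P.
  - by apply: e2_sound; exact: He.
  - apply: e2_sound; have [_ <- _ _] := HPN i i5; have := Fam i (p i) i5 (pC i i5); by rewrite np.
  - apply: e2_sound; have [_ _ _ <-] := HPN i i5; exact: Fam i _ i5 (v1C i i5).
have PY : forall i, i < 5 -> p i = v ((i + 4) %% 5) /\ n i = v ((i + 2) %% 5).
  move=> i i5; move/allP: HY => /(_ i); rewrite mem_iota add0n => /(_ i5).
  rewrite (nth_map 0) ?size_iota // nth_iota // add0n => /eqP [E1 E2].
  have [_ -> _ ->] := HPN i i5; by rewrite E1 E2.
have pE : forall i, i < 5 -> prev (C i) (v i) = v ((i + 4) %% 5) := fun i h => (PY i h).1.
have nE : forall i, i < 5 -> next (C i) (v (i.+1 %% 5)) = v ((i + 2) %% 5) :=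
  fun i h => (PY i h).2.
have pv : prev (C 0) (v 0) = v 4 := pE 0 isT.
have v4C : v 4 \in C 0 by rewrite -pv mem_prev; have [] := HC 0 isT.
pose q := prev (C 0) (v 4).
have qC : q \in C 0 by rewrite mem_prev.
have nq : next (C 0) q = v 4 by rewrite next_prev // UC.
case: (boolP (inS v q)) => [qS | qS]; last first.
  exists 1, q, 4; split => //; first exact: notinS.
  - move=> t t5.
    have i5 : (t + 1) %% 5 < 5 by rewrite ltn_mod.
    have := Fam _ _ i5 (pC _ i5); rewrite np // /p pE //.
    clear i5; have -> : ((t + 1) %% 5 + 4) %% 5 = t by case: t t5 => [|[|[|[|[|]]]]].
    by rewrite addn1.
  - apply/orP; right; have -> : (4 + 1) %% 5 = 0 by [].
    by have := Fam 0 q isT qC; rewrite nq.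
have [t5 qE] := inS_find qS; set t := find _ _ in t5 qE.
have n1 : next (C 0) (v 1) = v 2 := nE 0 isT.
have v2C : v 2 \in C 0 by rewrite -n1 mem_next; exact: v1C 0 isT.
pose r := next (C 0) (v 2).
case: (boolP (inS v r)) => [rS | rS]; last first.
  exists 4, r, 2; split => //; first exact: notinS.
  - move=> s s5.
    have i5 : (s + 4) %% 5 < 5 by rewrite ltn_mod.
    have := Fam _ _ i5 (v1C _ i5); rewrite nE //.
    clear i5; have -> : ((s + 4) %% 5).+1 %% 5 = s by case: s s5 => [|[|[|[|[|]]]]].
    have -> : ((s + 4) %% 5 + 2) %% 5 = s.+1 %% 5 by case: s s5 => [|[|[|[|[|]]]]].
    done.
  - apply/orP; left; have -> : (2 + 4 + 4) %% 5 = 0 by [].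
    exact: FamC 0 (v 2) isT v2C.
have [u5 rE] := inS_find rS; set u := find _ _ in u5 rE.
have n40 : next (C 0) (v 4) = v 0 by rewrite -pv next_prev // UC.
have n01 : next (C 0) (v 0) = v 1 by have [] := HC 0 isT.
have h1 : t != 4 by apply: (neq_idx (v:=v)); rewrite -qE eq_sym;
  have := NE 0 q 1 isT qC isT; rewrite /= nq.
have h2 : t != 0 by apply: (neq_idx (v:=v)); rewrite -qE eq_sym;
  have := NE 0 q 2 isT qC isT; rewrite /= nq n40.
have h3 : t != 1 by apply: (neq_idx (v:=v)); rewrite -qE eq_sym;
  have := NE 0 q 3 isT qC isT; rewrite /= nq n40 n01.
have h5 : u != t by apply: (neq_idx (v:=v)); rewrite -qE -rE;
  have := NE 0 q 5 isT qC isT; rewrite /= nq n40 n01 n1.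
have g1 : u != 2 by apply: (neq_idx (v:=v)); rewrite -rE;
  have := NE 0 (v 2) 1 isT v2C isT.
have g2 : u != 1 by apply: (neq_idx (v:=v)); rewrite -rE;
  have := NE 0 (v 1) 2 isT (v1C 0 isT) isT; rewrite /= n1.
have v0C : v 0 \in C 0 by have [] := HC 0 isT.
have g3 : u != 0 by apply: (neq_idx (v:=v)); rewrite -rE;
  have := NE 0 (v 0) 3 isT v0C isT; rewrite /= n01 n1.
have key : next (C 0) (v 2) = v 4.
  have : (t == 2) || (u == 4) by lia.
  case/orP=> /eqP E.
  - by rewrite -nq qE E.
  - by rewrite -/r rE E.
exfalso; apply: Hnr.
apply: (rainbow_cert (v:=v) (al:=al) (xs:=[:: 4; 0; 1; 2]) (cs:=[:: 3; 4; 1; 0])) => //.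
case=> [|[|[|[|]]]] //= _.
- by have := Fam 3 _ isT (v1C 3 isT); rewrite nE.
- by have := Fam 4 _ isT (v1C 4 isT); rewrite nE.
- exact: He 1 isT.
- by have := Fam 0 _ isT v2C; rewrite key.
Qed.
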